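(* Let $\mathbb{K}$ be a field of characteristic $0$. For a positive integer $r$, let $\mu(r)$ be the least integer $h$ such that $(1,r,h,r,1)$ is the Hilbert function of a standard graded Artinian Gorenstein $\mathbb{K}$-algebra, and let $\delta(r)=r-\mu(r)$. Then for every integer $m\geq 3$, \[\delta\!\left(m+\binom{m+2}{3}\right)\geq\binom{m}{3}.\]
   Context: Standard graded Artinian Gorenstein algebras $Q/I$ are taken with $I$ containing no linear forms, so the codimension equals $h_1$. *)

(* Defs.v *)
From HB Require Import structures.
From mathcomp Require Import all_boot all_order all_algebra.
From mathcomp Require Import mpoly.
Set Implicit Arguments. Unset Strict Implicit. Unset Printing Implicit Defensive.
Import GRing.Theory.
Local Open Scope ring_scope.

Definition lincomb (K : fieldType) (n k : nat) (c : 'I_k -> K)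
  (s : 'I_k -> {mpoly K[n]}) : {mpoly K[n]} :=
  \sum_(i < k) c i *: s i.

(* quotdim S I k : the K-vector space S / (S ∩ I) has dimension k,
   i.e. it has a basis given by the classes of k elements of S. *)
Definition quotdim (K : fieldType) (n : nat) (S I : {mpoly K[n]} -> Prop)
  (k : nat) : Prop :=
  exists s : 'I_k -> {mpoly K[n]},
    (forall i, S (s i)) /\
    (forall c : 'I_k -> K, I (lincomb c s) -> forall i, c i = 0) /\
    (forall p, S p -> exists c : 'I_k -> K, I (p - lincomb c s)).

Definition is_ideal (K : fieldType) (n : nat) (I : {mpoly K[n]} -> Prop) :=
  I 0 /\ (forall p q, I p -> I q -> I (p + q)) /\
  (forall a p, I p -> I (a * p)).

Definition homogeneous_ideal (K : fieldType) (n : nat)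
  (I : {mpoly K[n]} -> Prop) :=
  forall p, I p -> forall d, I (pihomog mdeg d p).

Definition degpart (K : fieldType) (n d : nat) : {mpoly K[n]} -> Prop :=
  fun p => p \is d.-homog.

Definition hilbert_at (K : fieldType) (n : nat) (I : {mpoly K[n]} -> Prop)
  (d k : nat) : Prop := @quotdim K n (@degpart K n d) I k.

(* preimage in Q of the socle 0 :_{Q/I} m of Q/I, m = (x_0,...,x_{n-1}) *)
Definition socle_pre (K : fieldType) (n : nat) (I : {mpoly K[n]} -> Prop)
  : {mpoly K[n]} -> Prop :=
  fun f => forall j : 'I_n, I ('X_j * f).

Definition AG_hilb_1rhr1 (K : fieldType) (r h : nat) : Prop :=
  exists I : {mpoly K[r]} -> Prop,
    is_ideal I /\ homogeneous_ideal I /\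
    hilbert_at I 0 1 /\ hilbert_at I 1 r /\ hilbert_at I 2 h /\
    hilbert_at I 3 r /\ hilbert_at I 4 1 /\
    (forall d, (5 <= d)%N -> hilbert_at I d 0) /\
    (* Gorenstein: the socle of Q/I is one-dimensional *)
    quotdim (socle_pre I) I 1.

Definition is_mu (K : fieldType) (r h : nat) : Prop :=
  AG_hilb_1rhr1 K r h /\ (forall h', AG_hilb_1rhr1 K r h' -> (h <= h')%N).

(* Main.v *)
Require Import Defs.
From HB Require Import structures.
From mathcomp Require Import all_boot all_order all_algebra.
From mathcomp Require Import mpoly.
From Stdlib Require Import Classical.
From mathcomp Require Import zify ring.
Set Implicit Arguments. Unset Strict Implicit. Unset Printing Implicit Defensive.
Import GRing.Theory.
Local Open Scope ring_scope.

Section Generic.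
Variables (K : fieldType) (n N : nat) (U : 'I_N -> 'X_{1..n}).
Hypothesis hU : forall l, mdeg (U l) = 4%N.

Definition L (g : {mpoly K[n]}) : K := \sum_(l < N) g@_(U l).
Definition Iset (p : {mpoly K[n]}) : Prop := forall q, L (q * p) = 0.

Lemma L0 : L 0 = 0.
Proof. by rewrite /L big1 // => l _; rewrite mcoeff0. Qed.
Lemma LD g h : L (g + h) = L g + L h.
Proof. by rewrite /L -big_split; apply: eq_bigr => l _; rewrite mcoeffD. Qed.
Lemma LZ c g : L (c *: g) = c * L g.
Proof. by rewrite /L mulr_sumr; apply: eq_bigr => l _; rewrite mcoeffZ. Qed.
Lemma LB g h : L (g - h) = L g - L h.
Proof. by rewrite -scaleN1r LD LZ mulN1r. Qed.
Lemma L_sum I (r : seq I) (P : pred I) F :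
  L (\sum_(i <- r | P i) F i) = \sum_(i <- r | P i) L (F i).
Proof. exact: (big_morph L LD L0). Qed.

Lemma LXX w b : L ('X_[w] * 'X_[b]) = \sum_(l < N) ((w + b)%MM == U l)%:R.
Proof. by rewrite /L; apply: eq_bigr => l _; rewrite -mpolyXD mcoeffX. Qed.

Lemma L_monoP p : (forall w, L ('X_[w] * p) = 0) -> Iset p.
Proof.
move=> H q; rewrite (mpolyE q) mulr_suml L_sum big1 // => w _.
by rewrite -scalerAl LZ H mulr0.
Qed.

Lemma Iset_monoP p : Iset p -> forall w, L ('X_[w] * p) = 0.
Proof. by move=> H w; apply: H. Qed.

Lemma Iset0 : Iset 0.
Proof. by move=> q; rewrite mulr0 L0. Qed.
Lemma IsetD p q : Iset p -> Iset q -> Iset (p + q).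
Proof. by move=> Hp Hq a; rewrite mulrDr LD Hp Hq addr0. Qed.
Lemma IsetZ c p : Iset p -> Iset (c *: p).
Proof. by move=> Hp a; rewrite -scalerAr LZ Hp mulr0. Qed.
Lemma IsetB p q : Iset p -> Iset q -> Iset (p - q).
Proof. by move=> Hp Hq; rewrite -scaleN1r; apply: IsetD => //; apply: IsetZ. Qed.
Lemma IsetM a p : Iset p -> Iset (a * p).
Proof. by move=> Hp q; rewrite mulrA Hp. Qed.

Lemma L_homog e g : g \is e.-homog -> e != 4%N -> L g = 0.
Proof.
move=> hg he; rewrite /L big1 // => l _; apply: (dhomog_nemf_coeff hg).
by rewrite -[_ (U l)]/(mdeg (U l)) hU eq_sym.
Qed.


Lemma LXX_deg w b : (mdeg w + mdeg b != 4)%N ->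
  \sum_(l < N) ((w + b)%MM == U l)%:R = 0 :> K.
Proof.
move=> H; rewrite big1 // => l _.
case: eqP => // E; move: H; rewrite -mdegD E hU eqxx //.
Qed.

Lemma Iset_homog p : Iset p -> forall d, Iset (pihomog mdeg d p).
Proof.
move=> Ip d; apply: L_monoP => w.
have hom e : 'X_[w] * pihomog mdeg e p \is (mdeg w + e).-homog.
  by apply: dhomogM; [rewrite dhomogX | apply: pihomogP].
case: (eqVneq (mdeg w + d)%N 4%N) => [E|NE]; last exact: L_homog (hom d) NE.
pose k := maxn (mmeasure mdeg p) d.+1.
have := Ip ('X_[w]).
rewrite {1}(pihomog_partitionE (k := k) (leq_maxl _ _)) mulr_sumr L_sum.
have dk : (d < k)%N by rewrite leq_maxr.
rewrite (bigD1 (Ordinal dk)) //= big1 ?addr0 // => e He.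
apply: L_homog (hom e) _; rewrite -E eqn_add2l.
by apply: contra He => /eqP He; apply/eqP/val_inj.
Qed.

Lemma lincomb_coef k (c : 'I_k -> K) (b : 'I_k -> 'X_{1..n}) v :
  (lincomb c (fun j => 'X_[b j]))@_v = \sum_(j < k) c j * (b j == v)%:R.
Proof.
rewrite /lincomb raddf_sum; apply: eq_bigr => j _; by rewrite /= mcoeffZ mcoeffX.
Qed.

Lemma L_lincomb w k (c : 'I_k -> K) (b : 'I_k -> 'X_{1..n}) :
  L ('X_[w] * lincomb c (fun j => 'X_[b j])) =
  \sum_(j < k) c j * \sum_(l < N) ((w + b j)%MM == U l)%:R.
Proof.
rewrite /lincomb mulr_sumr L_sum; apply: eq_bigr => j _.
by rewrite -scalerAr LZ LXX.
Qed.

Lemma indep_mat k (b w : 'I_k -> 'X_{1..n}) :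
  (forall i j, \sum_(l < N) ((w i + b j)%MM == U l)%:R = (i == j)%:R :> K) ->
  forall c : 'I_k -> K, Iset (lincomb c (fun j => 'X_[b j])) -> forall i, c i = 0.
Proof.
move=> H c Ic i; have := Ic ('X_[w i]); rewrite L_lincomb.
rewrite (bigD1 i) //= H eqxx mulr1 big1 ?addr0 // => j Hj.
by rewrite H eq_sym (negbTE Hj) mulr0.
Qed.

Lemma mat_inj k (b w : 'I_k -> 'X_{1..n}) :
  (forall i j, \sum_(l < N) ((w i + b j)%MM == U l)%:R = (i == j)%:R :> K) ->
  injective b.
Proof.
move=> H j1 j2 E; have := H j1 j2; rewrite -E H eqxx.
by case: eqP => // _ /eqP; rewrite oner_eq0.
Qed.

Lemma span_B1 d k (b w : 'I_k -> 'X_{1..n}) :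
  (forall i j, \sum_(l < N) ((w i + b j)%MM == U l)%:R = (i == j)%:R :> K) ->
  (forall j, mdeg (b j) = d) ->
  (forall v, mdeg v = d -> exists j, v = b j) ->
  forall p, p \is d.-homog -> exists c, Iset (p - lincomb c (fun j => 'X_[b j])).
Proof.
move=> H hb cov p hp; exists (fun j => p@_(b j)).
suff -> : p - lincomb (fun j => p@_(b j)) (fun j => 'X_[b j]) = 0 by apply: Iset0.
apply/mpolyP => v; rewrite mcoeffB lincomb_coef mcoeff0.
case: (eqVneq (mdeg v) d) => [/cov [j0 ->]|Nv].
  rewrite (bigD1 j0) //= eqxx mulr1 big1 ?addr0 ?subrr // => j Hj.
  by rewrite (inj_eq (mat_inj H)) (negbTE Hj) mulr0.
rewrite (dhomog_nemf_coeff hp) // big1 ?subrr // => j _.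
case: eqP => [E|]; last by rewrite mulr0.
by move: Nv; rewrite -E hb eqxx.
Qed.

Lemma span_B2 d k (b w : 'I_k -> 'X_{1..n}) :
  (forall i j, \sum_(l < N) ((w i + b j)%MM == U l)%:R = (i == j)%:R :> K) ->
  (forall j, mdeg (b j) = d) ->
  (forall v, (mdeg v + d = 4)%N -> exists i, v = w i) ->
  forall p, p \is d.-homog -> exists c, Iset (p - lincomb c (fun j => 'X_[b j])).
Proof.
move=> H hb cov p hp; exists (fun i => L ('X_[w i] * p)).
apply: L_monoP => v; rewrite mulrBr LB L_lincomb.
case: (eqVneq (mdeg v + d)%N 4%N) => [/cov [i0 ->]|Nv].
  rewrite (bigD1 i0) //= H eqxx mulr1 big1 ?addr0 ?subrr // => j Hj.
  by rewrite H eq_sym (negbTE Hj) mulr0.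
rewrite (L_homog (e := (mdeg v + d)%N)) //; last first.
  by apply: dhomogM => //; rewrite dhomogX.
rewrite big1 ?subrr // => j _; rewrite LXX_deg ?mulr0 // hb //.
Qed.

Definition spanI k (t : 'I_k -> {mpoly K[n]}) p :=
  exists c, Iset (p - lincomb c t).

Lemma spanI0 k t : @spanI k t 0.
Proof.
exists (fun _ => 0); rewrite /lincomb big1 ?subrr; first exact: Iset0.
by move=> j _; rewrite scale0r.
Qed.

Lemma spanID k t p q : @spanI k t p -> spanI t q -> spanI t (p + q).
Proof.
move=> [c1 H1] [c2 H2]; exists (fun j => c1 j + c2 j).
have -> : p + q - lincomb (fun j => c1 j + c2 j) t =
   (p - lincomb c1 t) + (q - lincomb c2 t).
  rewrite /lincomb (eq_bigr (fun j => c1 j *: t j + c2 j *: t j)).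
    by rewrite big_split /= opprD addrACA.
  by move=> j _; rewrite scalerDl.
exact: IsetD.
Qed.

Lemma spanIZ k t a p : @spanI k t p -> spanI t (a *: p).
Proof.
move=> [c H]; exists (fun j => a * c j).
have -> : a *: p - lincomb (fun j => a * c j) t = a *: (p - lincomb c t).
  rewrite scalerBr /lincomb scaler_sumr; congr (_ - _).
  by apply: eq_bigr => j _; rewrite scalerA.
exact: IsetZ.
Qed.

Lemma span_B3 d k (t : 'I_k -> 'X_{1..n}) :
  (forall u, mdeg u = d ->
     (forall w, \sum_(l < N) ((w + u)%MM == U l)%:R = 0 :> K) \/
     (exists j, forall w, \sum_(l < N) ((w + u)%MM == U l)%:R =
                          \sum_(l < N) ((w + t j)%MM == U l)%:R :> K)) ->
  forall p, p \is d.-homog -> spanI (fun j => 'X_[t j]) p.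
Proof.
move=> cov p hp; rewrite (mpolyE p) big_seq.
apply: big_ind => //; [exact: spanI0 | exact: spanID |].
move=> u Hu; apply: spanIZ.
have := dhomog_mf hp Hu => /= du.
case: (cov u du) => [H0|[j Hj]].
  exists (fun _ => 0); rewrite /lincomb big1 ?subr0.
    by apply: L_monoP => w; rewrite LXX H0.
  by move=> i _; rewrite scale0r.
exists (fun i => (i == j)%:R); rewrite /lincomb (bigD1 j) //= eqxx scale1r.
rewrite big1 ?addr0; last by move=> i Hi; rewrite (negbTE Hi) scale0r.
by apply: L_monoP => w; rewrite mulrBr LB !LXX Hj subrr.
Qed.


Lemma extract (S : {mpoly K[n]} -> Prop) k (t : 'I_k -> {mpoly K[n]}) :
  (forall j, S (t j)) -> (forall p, S p -> spanI t p) ->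
  exists k', (k' <= k)%N /\ quotdim S Iset k'.
Proof.
elim: k t => [|k IH] t St Sp.
  exists 0%N; split => //; exists t; split => //; split => //.
  by move=> c _ [].
case: (classic (forall c, Iset (lincomb c t) -> forall i, c i = 0)) => [Ind|NInd].
  by exists k.+1; split => //; exists t.
have [c [Ic [i ci]]] : exists c, Iset (lincomb c t) /\ exists i, c i <> 0.
  apply: NNPP => NE; apply: NInd => c Ic i; apply: NNPP => Nci.
  by apply: NE; exists c; split => //; exists i.
pose t' j := t (lift i j).
have [k' [Hk' Q]] : exists k', (k' <= k)%N /\ quotdim S Iset k'.
  apply: (IH t') => [j|p Sp']; first exact: St.
  have [c0 H0] := Sp p Sp'.
  pose a := c0 i / c i.
  exists (fun j => c0 (lift i j) - a * c (lift i j)).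
  have -> : p - lincomb (fun j => c0 (lift i j) - a * c (lift i j)) t' =
      (p - lincomb c0 t) + a *: lincomb c t.
    rewrite /lincomb /t' [in RHS](bigD1_ord i) //= [in RHS](bigD1_ord i) //=.
    rewrite scalerDr scalerA /a divfK; last exact/eqP.
    rewrite scaler_sumr; under eq_bigr do rewrite scalerBl.
    rewrite sumrB; under [X in _ = _ + (_ + X)]eq_bigr do rewrite scalerA.
    move: (\sum_(i0 < k) c0 (lift i i0) *: t (lift i i0)) => A.
    move: (\sum_(i0 < k) (c0 i / c i * c (lift i i0)) *: t (lift i i0)) => B.
    move: (c0 i *: t i) => T.
    ring.
  by apply: IsetD => //; apply: IsetZ.
by exists k'; split => //; apply: leq_trans Hk' _.
Qed.

Lemma LX v : L 'X_[v] = \sum_(l < N) (v == U l)%:R.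
Proof. by rewrite -[X in L X]mul1r -mpolyX0 LXX add0m. Qed.

Lemma mono_split (w : 'X_{1..n}) : w != 0%MM -> exists j w', w = (U_(j) + w')%MM.
Proof.
move=> nw; case: (pickP (fun j => w j != 0%N)) => [j Hj|H].
  exists j, (w - U_(j))%MM; rewrite addmC submK //.
  by rewrite lep1mP.
move: nw; suff -> : w = 0%MM by rewrite eqxx.
by apply/mnmP => j; rewrite mnm0E; move: (H j) => /= /negbFE /eqP.
Qed.

Lemma socle_quot (hUinj : injective U) (l0 : 'I_N) : quotdim (socle_pre Iset) Iset 1.
Proof.
have mat : forall i j : 'I_1, \sum_(l < N) (((fun _ => 0%MM) i + (fun _ => U l0) j)%MM == U l)%:R = (i == j)%:R :> K.
  move=> i j; rewrite !ord1 eqxx add0m (bigD1 l0) //= eqxx big1 ?addr0 //.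
  by move=> l Hl; rewrite (inj_eq hUinj) eq_sym (negbTE Hl).
exists (fun _ => 'X_[U l0]); split; last split.
- move=> _ j; apply: L_monoP => w; rewrite mulrA -!mpolyXD LX big1 // => l _.
  case: eqP => // E; have := congr1 mdeg E; rewrite !mdegD mdeg1 !hU; lia.
- exact: indep_mat mat.
- move=> f Sf; exists (fun _ => L f); apply: L_monoP => w.
  rewrite /lincomb big_ord1 mulrBr LB -scalerAr LZ.
  case: (eqVneq w 0%MM) => [->|nw].
    by rewrite mpolyX0 !mul1r LX (bigD1 l0) //= eqxx big1 ?addr0 ?mulr1 ?subrr // => l Hl;
       rewrite (inj_eq hUinj) eq_sym (negbTE Hl).
  have [j [w' ->]] := mono_split nw.
  rewrite LXX LXX_deg ?mulr0 ?subr0; last first.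
    by rewrite mdegD mdeg1 hU; lia.
  by rewrite mpolyXD -mulrA mulrCA; apply: Sf.
Qed.

Lemma quot_mat d k (b w : 'I_k -> 'X_{1..n}) :
  (forall i j, \sum_(l < N) ((w i + b j)%MM == U l)%:R = (i == j)%:R :> K) ->
  (forall j, mdeg (b j) = d) ->
  (forall p, p \is d.-homog -> exists c, Iset (p - lincomb c (fun j => 'X_[b j]))) ->
  quotdim (degpart d) Iset k.
Proof.
move=> mat hb sp; exists (fun j => 'X_[b j]); split; last split.
- by move=> j; rewrite /degpart dhomogX /= hb.
- exact: indep_mat mat.
- exact: sp.
Qed.

Theorem AG_generic (hUinj : injective U) (l0 : 'I_N)
  (b1 w1 : 'I_n -> 'X_{1..n})
  (mat1 : forall i j, \sum_(l < N) ((w1 i + b1 j)%MM == U l)%:R = (i == j)%:R :> K)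
  (hb1 : forall j, mdeg (b1 j) = 1%N)
  (cov1 : forall v, mdeg v = 1%N -> exists j, v = b1 j)
  (b3 w3 : 'I_n -> 'X_{1..n})
  (mat3 : forall i j, \sum_(l < N) ((w3 i + b3 j)%MM == U l)%:R = (i == j)%:R :> K)
  (hb3 : forall j, mdeg (b3 j) = 3%N)
  (cov3 : forall v, (mdeg v + 3 = 4)%N -> exists i, v = w3 i)
  k2 (t2 : 'I_k2 -> 'X_{1..n}) (ht2 : forall j, mdeg (t2 j) = 2%N)
  (cov2 : forall u, mdeg u = 2%N ->
     (forall w, \sum_(l < N) ((w + u)%MM == U l)%:R = 0 :> K) \/
     (exists j, forall w, \sum_(l < N) ((w + u)%MM == U l)%:R =
                          \sum_(l < N) ((w + t2 j)%MM == U l)%:R :> K)) :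
  exists h, (h <= k2)%N /\ AG_hilb_1rhr1 K n h.
Proof.
have St2 : forall j, @degpart K n 2 'X_[t2 j] by move=> j; rewrite /degpart dhomogX /= ht2.
have [h [hk Q2]] := @extract (@degpart K n 2) k2 (fun j => 'X_[t2 j]) St2 (span_B3 cov2).
have mat0 : forall i j : 'I_1, \sum_(l < N) (((fun _ => U l0) i + (fun _ => 0%MM) j)%MM == U l)%:R = (i == j)%:R :> K.
  move=> i j; rewrite !ord1 eqxx addm0 (bigD1 l0) //= eqxx big1 ?addr0 //.
  by move=> l Hl; rewrite (inj_eq hUinj) eq_sym (negbTE Hl).
have mat4 : forall i j : 'I_1, \sum_(l < N) (((fun _ => 0%MM) i + (fun _ => U l0) j)%MM == U l)%:R = (i == j)%:R :> K.
  move=> i j; rewrite !ord1 eqxx add0m (bigD1 l0) //= eqxx big1 ?addr0 //.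
  by move=> l Hl; rewrite (inj_eq hUinj) eq_sym (negbTE Hl).
exists h; split => //; exists Iset.
split; first by split; [exact: Iset0 | split; [exact: IsetD | exact: IsetM]].
split; first exact: Iset_homog.
split.
  apply: (quot_mat (d := 0) mat0); first by move=> j /=; rewrite mdeg0.
  apply: span_B1 mat0 _ _; first by move=> j /=; rewrite mdeg0.
  by move=> v /eqP; rewrite mdeg_eq0 => /eqP ->; exists ord0.
split.
  apply: (quot_mat mat1 hb1); exact: span_B1 mat1 hb1 cov1.
split; first exact: Q2.
split.
  apply: (quot_mat mat3 hb3); exact: span_B2 mat3 hb3 cov3.
split.
  apply: (quot_mat (d := 4) mat4); first by move=> j /=; rewrite hU.
  apply: span_B2 mat4 _ _; first by move=> j /=; rewrite hU.
  move=> v E; have : mdeg v == 0%N by apply/eqP; lia.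
  by rewrite mdeg_eq0 => /eqP ->; exists ord0.
split; last exact: socle_quot.
move=> d hd; exists (fun _ => 0); split; first by case.
split; first by move=> c _ [].
move=> p hp; exists (fun _ => 0); rewrite /lincomb big_ord0 subr0.
apply: L_monoP => w; apply: (L_homog (e := (mdeg w + d)%N)).
  by apply: dhomogM => //; rewrite dhomogX.
rewrite neq_ltn; apply/orP; right; apply: leq_trans hd _; exact: leq_addl.
Qed.

End Generic.

Section Mon.
Variables (m' d : nat).
Definition SB : seq 'X_{1..m'.+1} :=
  [seq s2m t | t : d.-tuple 'I_m'.+1 <- enum (basis m'.+1 d)].
Lemma size_SB : size SB = 'C(d + m', d).
Proof. exact: size_basis. Qed.
Definition Mon (k : 'I_('C(d + m', d))) : 'X_{1..m'.+1} := nth 0%MM SB k.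
Lemma mdeg_Mon k : mdeg (Mon k) = d.
Proof.
apply/eqP; rewrite basis_cover; apply: mem_nth; rewrite size_SB; exact: ltn_ord.
Qed.
Lemma Mon_inj : injective Mon.
Proof.
move=> k1 k2 /eqP; rewrite /Mon nth_uniq ?size_SB ?ltn_ord //; last exact: uniq_basis.
by move/eqP/val_inj.
Qed.
Lemma Mon_surj v : mdeg v = d -> exists k, Mon k = v.
Proof.
move=> /eqP; rewrite basis_cover -/SB => vin.
have hi : (index v SB < 'C(d + m', d))%N by rewrite -size_SB index_mem.
by exists (Ordinal hi); rewrite /Mon nth_index.
Qed.
End Mon.

Section Concrete.
Variables (K : fieldType) (m' : nat).
Local Notation m := m'.+1.
Local Notation N := 'C(3 + m', 3).
Local Notation N2 := 'C(2 + m', 2).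
Local Notation r := (m + N)%N.

Definition M : 'I_N -> 'X_{1..m} := @Mon m' 3.
Definition Q2 : 'I_N2 -> 'X_{1..m} := @Mon m' 2.
Definition xv (i : 'I_m) : 'I_r := lshift N i.
Definition yv (k : 'I_N) : 'I_r := rshift m k.

Lemma split_x i : split (xv i) = inl i. Proof. exact: (unsplitK (inl _ i)). Qed.
Lemma split_y k : split (yv k) = inr k. Proof. exact: (unsplitK (inr _ k)). Qed.
Lemma eq_xy i k : (xv i == yv k) = false.
Proof.
apply/negbTE; apply/eqP => /(congr1 val) /=; move: (ltn_ord i) => h E.
by move: h; rewrite E ltnNge leq_addr.
Qed.

Definition liftx (b : 'X_{1..m}) : 'X_{1..r} :=
  [multinom (if split j is inl i then b i else 0%N) | j < r].

Lemma liftx_x b i : liftx b (xv i) = b i.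
Proof. by rewrite mnmE split_x. Qed.
Lemma liftx_y b k : liftx b (yv k) = 0%N.
Proof. by rewrite mnmE split_y. Qed.

Lemma coordP (v1 v2 : 'X_{1..r}) :
  (forall i, v1 (xv i) = v2 (xv i)) -> (forall k, v1 (yv k) = v2 (yv k)) -> v1 = v2.
Proof.
move=> hx hy; apply/mnmP => j; case: (split_ordP j) => [i ->|k ->]; [exact: hx|exact: hy].
Qed.

Lemma U_x_x i i' : U_(xv i)%MM (xv i') = (i == i') :> nat.
Proof. by rewrite mnm1E eq_lshift. Qed.
Lemma U_x_y i k : U_(xv i)%MM (yv k) = 0%N.
Proof. by rewrite mnm1E eq_xy. Qed.
Lemma U_y_x k i : U_(yv k)%MM (xv i) = 0%N.
Proof. by rewrite mnm1E eq_sym eq_xy. Qed.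
Lemma U_y_y k k' : U_(yv k)%MM (yv k') = (k == k') :> nat.
Proof. by rewrite mnm1E eq_rshift. Qed.

Local Notation coordE := (mnmDE, liftx_x, liftx_y, U_x_x, U_x_y, U_y_x, U_y_y, mnm0E, mnm1E, mulmnE).

Lemma liftxD a b : liftx (a + b)%MM = (liftx a + liftx b)%MM.
Proof. by apply: coordP => [i|k]; rewrite !coordE. Qed.
Lemma liftxU i : liftx U_(i)%MM = U_(xv i)%MM.
Proof. by apply: coordP => [i'|k]; rewrite !coordE // eq_lshift. Qed.
Lemma liftx_inj : injective liftx.
Proof. by move=> a b E; apply/mnmP => i; rewrite -!liftx_x E. Qed.
Lemma mdeg_liftx b : mdeg (liftx b) = mdeg b.
Proof.
rewrite !mdegE big_split_ord /= [X in (_ + X)%N]big1 ?addn0; last first.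
  by move=> k _; rewrite -/(yv k) liftx_y.
by apply: eq_bigr => i _; rewrite -/(xv i) liftx_x.
Qed.

Definition Uc (l : 'I_N) : 'X_{1..r} := (U_(yv l) + liftx (M l))%MM.

Lemma mdeg_Uc l : mdeg (Uc l) = 4%N.
Proof. by rewrite mdegD mdeg1 mdeg_liftx /M mdeg_Mon. Qed.

Lemma Uc_inj : injective Uc.
Proof.
move=> l1 l2 /mnmP /(_ (yv l1)); rewrite !coordE eqxx /=.
by case: eqVneq => // ->.
Qed.

Definition ydeg (v : 'X_{1..r}) : nat := (\sum_(k < N) v (yv k))%N.
Lemma ydegD a b : ydeg (a + b)%MM = (ydeg a + ydeg b)%N.
Proof. by rewrite /ydeg -big_split; apply: eq_bigr => k _; rewrite mnmDE. Qed.
Lemma ydeg_x i : ydeg U_(xv i)%MM = 0%N.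
Proof. by rewrite /ydeg big1 // => k _; rewrite U_x_y. Qed.
Lemma ydeg_y k : ydeg U_(yv k)%MM = 1%N.
Proof.
rewrite /ydeg (bigD1 k) //= U_y_y eqxx big1 // => k' Hk'.
by rewrite U_y_y eq_sym (negbTE Hk').
Qed.
Lemma ydeg_liftx b : ydeg (liftx b) = 0%N.
Proof. by rewrite /ydeg big1 // => k _; rewrite liftx_y. Qed.
Lemma ydeg_Uc l : ydeg (Uc l) = 1%N.
Proof. by rewrite ydegD ydeg_y ydeg_liftx. Qed.

Lemma ydeg_ne v : ydeg v != 1%N -> \sum_(l < N) (v == Uc l)%:R = 0 :> K.
Proof.
move=> H; rewrite big1 // => l _; case: eqP => // E.
by move: H; rewrite E ydeg_Uc.
Qed.

Lemma Ychar w k :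
  \sum_(l < N) ((w + U_(yv k))%MM == Uc l)%:R = (w == liftx (M k))%:R :> K.
Proof.
rewrite (bigD1 k) //= big1 ?addr0.
  by rewrite /Uc addmC eqm_add2l.
move=> l Hl; case: eqP => // /mnmP /(_ (yv k)); rewrite !coordE eqxx.
by rewrite (negbTE Hl) addn1.
Qed.


Lemma U3 (a b : 'I_m) : ((U_(a) *+ 2 + U_(b))%MM == (U_(a) *+ 3)%MM) = (a == b).
Proof.
apply/eqP/eqP => [/mnmP /(_ b)|->].
  rewrite mnmDE !mulmnE !mnm1E eqxx; case: eqP => //= _; lia.
apply/mnmP => t; rewrite mnmDE !mulmnE; lia.
Qed.

Definition Wv (kc : 'I_m -> 'I_N) (j : 'I_r) : 'X_{1..r} :=
  match split j with
  | inl a => (U_(yv (kc a)) + liftx (U_(a) *+ 2))%MM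
  | inr k => liftx (M k)
  end.

Lemma mdeg_Wv kc j : mdeg (Wv kc j) = 3%N.
Proof.
rewrite /Wv; case: (split j) => [a|k].
  by rewrite mdegD mdeg1 mdeg_liftx mdegMn mdeg1.
by rewrite mdeg_liftx /M mdeg_Mon.
Qed.

Lemma mat1 kc (hkc : forall a, M (kc a) = (U_(a) *+ 3)%MM) i j :
  \sum_(l < N) ((Wv kc i + U_(j))%MM == Uc l)%:R = (i == j)%:R :> K.
Proof.
rewrite /Wv; case: (split_ordP i) => a ->; case: (split_ordP j) => b ->;
  rewrite -?[lshift _ a]/(xv a) -?[lshift _ b]/(xv b)
          -?[rshift _ a]/(yv a) -?[rshift _ b]/(yv b).
- have -> : (U_(yv (kc a)) + liftx (U_(a) *+ 2) + U_(xv b))%MM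
          = (liftx (U_(a) *+ 2 + U_(b)) + U_(yv (kc a)))%MM.
    by apply: coordP => [i'|k]; rewrite !coordE; lia.
  by rewrite Ychar (inj_eq liftx_inj) hkc U3 eq_lshift.
- rewrite ydeg_ne ?eq_xy //.
  by rewrite !ydegD ydeg_y ydeg_liftx ydeg_y.
- rewrite ydeg_ne ?(eq_sym (yv _)) ?eq_xy //.
  by rewrite !ydegD ydeg_x ydeg_liftx.
- rewrite Ychar (inj_eq liftx_inj) (inj_eq (@Mon_inj _ _)) eq_rshift //.
Qed.

Lemma mat3 kc (hkc : forall a, M (kc a) = (U_(a) *+ 3)%MM) i j :
  \sum_(l < N) ((U_(i) + Wv kc j)%MM == Uc l)%:R = (i == j)%:R :> K.
Proof. by rewrite addmC mat1 // eq_sym. Qed.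

Definition Tv (k2 : 'I_N2 -> 'I_N) (j : 'I_(N2 + N2)) : 'X_{1..r} :=
  match split j with
  | inl q => liftx (Q2 q)
  | inr q => (U_(yv (k2 q)) + U_(xv ord0))%MM
  end.

Lemma mdeg_Tv k2 j : mdeg (Tv k2 j) = 2%N.
Proof.
rewrite /Tv; case: (split j) => [q|q].
  by rewrite mdeg_liftx /Q2 mdeg_Mon.
by rewrite mdegD !mdeg1.
Qed.

Lemma cov2_xy k2 (hk2 : forall q, M (k2 q) = (U_(ord0) + Q2 q)%MM) a k :
  (forall w, \sum_(l < N) ((w + (U_(xv a) + U_(yv k)))%MM == Uc l)%:R = 0 :> K) \/
  (exists j, forall w, \sum_(l < N) ((w + (U_(xv a) + U_(yv k)))%MM == Uc l)%:R =
                       \sum_(l < N) ((w + Tv k2 j)%MM == Uc l)%:R :> K).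
Proof.
case: (eqVneq (M k a) 0%N) => [Z|NZ].
  left => w; rewrite addmA (Ychar (w + U_(xv a))%MM k); case: eqP => // /mnmP /(_ (xv a)).
  by rewrite !coordE eqxx Z addn1.
right; pose b := (M k - U_(a))%MM.
have EM : M k = (U_(a) + b)%MM by rewrite addmC submK // lep1mP.
have db : mdeg b = 2%N.
  by have := mdeg_Mon k; rewrite -/(M k) EM mdegD mdeg1 => [[]].
have [q hq] := Mon_surj db.
exists (rshift _ q) => w.
rewrite /Tv (unsplitK (inr _ q)).
have -> : (w + (U_(yv (k2 q)) + U_(xv ord0)) = (w + U_(xv ord0)) + U_(yv (k2 q)))%MM.
  by apply: coordP => [i'|k']; rewrite !coordE; lia.
rewrite addmA (Ychar (w + U_(xv a))%MM k) (Ychar (w + U_(xv ord0))%MM (k2 q)).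
rewrite hk2 /Q2 hq EM !liftxD !liftxU.
by rewrite ![(w + _)%MM]addmC !eqm_add2l.
Qed.

Lemma cov2 k2 (hk2 : forall q, M (k2 q) = (U_(ord0) + Q2 q)%MM) u :
  mdeg u = 2%N ->
  (forall w, \sum_(l < N) ((w + u)%MM == Uc l)%:R = 0 :> K) \/
  (exists j, forall w, \sum_(l < N) ((w + u)%MM == Uc l)%:R =
                       \sum_(l < N) ((w + Tv k2 j)%MM == Uc l)%:R :> K).
Proof.
move=> du.
have nu : u != 0%MM by rewrite -mdeg_eq0 du.
have [j1 [u' Eu]] := mono_split nu.
have : mdeg u' == 1%N by move: du; rewrite Eu mdegD mdeg1 add1n => [[->]].
case/mdeg1P => j2 /eqP Eu'; rewrite {}Eu {}Eu' {u du nu}.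
case: (split_ordP j1) => a ->; case: (split_ordP j2) => b ->;
  rewrite -?[lshift _ a]/(xv a) -?[lshift _ b]/(xv b)
          -?[rshift _ a]/(yv a) -?[rshift _ b]/(yv b).
- right; have [q hq] : exists q, Q2 q = (U_(a) + U_(b))%MM.
    by apply: Mon_surj; rewrite mdegD !mdeg1.
  exists (lshift _ q) => w.
  by rewrite /Tv (unsplitK (inl _ q)) hq liftxD !liftxU.
- exact: cov2_xy.
- by rewrite addmC; apply: cov2_xy.
- left => w; rewrite ydeg_ne // !ydegD !ydeg_y; lia.
Qed.

Theorem concrete_AG : exists h, (h <= N2 + N2)%N /\ AG_hilb_1rhr1 K r h.
Proof.
have [kc hkc] : exists kc : 'I_m -> 'I_N, forall a, M (kc a) = (U_(a) *+ 3)%MM.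
  apply: (@fin_all_exists _ (fun _ => 'I_N) (fun a k => M k = (U_(a) *+ 3)%MM)) => a.
  by apply: Mon_surj; rewrite mdegMn mdeg1.
have [k2 hk2] : exists k2 : 'I_N2 -> 'I_N, forall q, M (k2 q) = (U_(ord0) + Q2 q)%MM.
  apply: (@fin_all_exists _ (fun _ => 'I_N) (fun q k => M k = (U_(ord0) + Q2 q)%MM)) => q.
  by apply: Mon_surj; rewrite mdegD mdeg1 /Q2 mdeg_Mon.
apply: (@AG_generic K r N Uc mdeg_Uc Uc_inj (kc ord0) (fun j => U_(j)%MM) (Wv kc)
   (mat1 hkc) _ _ (Wv kc) (fun j => U_(j)%MM) (mat3 hkc) (mdeg_Wv kc) _ _
   (Tv k2) (mdeg_Tv k2) (cov2 hk2)).
- by move=> j; rewrite mdeg1.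
- by move=> v /eqP /mdeg1P [j /eqP ->]; exists j.
- move=> v E; have /mdeg1P [j /eqP ->] : mdeg v == 1%N by apply/eqP; lia.
  by exists j.
Qed.

End Concrete.

Lemma min_exists (P : nat -> Prop) n : P n ->
  exists h, P h /\ (forall h', P h' -> (h <= h')%N) /\ (h <= n)%N.
Proof.
suff H : forall k j, (j <= k)%N -> P j ->
    exists h, P h /\ (forall h', P h' -> (h <= h')%N) /\ (h <= j)%N.
  by move=> Pn; apply: (H n).
elim=> [|k IH] j hj Pj.
  have j0 : j = 0%N by lia.
  by subst j; exists 0%N.
case: (classic (exists j', P j' /\ (j' < j)%N)) => [[j' [Pj' lt]]|NE].
  have [h [Ph [Hm hl]]] := IH j' ltac:(lia) Pj'.
  by exists h; split => //; split => //; lia.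
exists j; split => //; split => // h' Ph'.
rewrite leqNgt; apply/negP => lt; apply: NE; exists h'; split => //.
Qed.

Unset Implicit Arguments.
Theorem proposition3p4 (K : fieldType) (charK0 : [pchar K] =i pred0)
  (m : nat) (hm : (3 <= m)%N) :
  exists h : nat,
    is_mu K (m + 'C(m.+2, 3))%N h /\
    (Posz 'C(m, 3) <= Posz (m + 'C(m.+2, 3))%N - Posz h)%R.
Proof.
case: m hm => [//|m'] _.
have [h0 [hh0 AG0]] := concrete_AG K m'.
have [h [Ph [minh hle]]] := min_exists AG0.
exists h; split; first by split.
rewrite Num.Theory.lerBrDr -PoszD lez_nat.
have e1 : 'C(2 + m', 2) = ('C(m'.+1, 2) + m'.+1)%N by rewrite add2n binS bin1.
have e2 : 'C(m'.+3, 3) = ('C(m'.+1, 3) + 'C(m'.+1, 2) + 'C(m'.+1, 2) + m'.+1)%N.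
  by rewrite binS binS [X in (_ + X)%N]binS bin1; lia.
move: hh0; rewrite e1 e2; lia.
Qed.
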